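(* Let $E$ be a $p$-adic field, $\psi$ a nontrivial additive character of $E$, and $f_1,\dots,f_n$ analytic functions on a ball $B\subset E^N$ centered at $0$ whose differentials $d_0f_1,\dots,d_0f_n$ at $0$ are linearly independent. Then there is $a\in E^*$ such that for all $t\in E^*$ with $|t|$ sufficiently large, the functions $\psi(tf_1),\dots,\psi(tf_n)$ restricted to $t^{-1}aB$ are linearly independent. *)

(* Defs.v *)
From HB Require Import structures.
From mathcomp Require Import all_boot all_order all_algebra.
From mathcomp Require Import reals complex.
Set Implicit Arguments. Unset Strict Implicit. Unset Printing Implicit Defensive.
Import Order.TTheory GRing.Theory Num.Theory.
Local Open Scope ring_scope.

(* A p-adic field: a field E of characteristic 0 with a non-archimedean,
   nontrivial, discrete absolute value v : E -> R, complete, with finite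
   residue field.  These are exactly the finite extensions of Q_p
   (for some prime p), i.e. the non-archimedean local fields of char. 0. *)
Record padic_field (R : realType) (E : fieldType) (v : E -> R) : Prop := {
  pf_ge0 : forall x, 0 <= v x;
  pf_eq0 : forall x, (v x == 0) = (x == 0);
  pf_mul : forall x y, v (x * y) = v x * v y;
  pf_ultra : forall x y, v (x + y) <= Num.max (v x) (v y);
  pf_char0 : forall k : nat, (k.+1)%:R != 0 :> E;
  pf_discrete : exists pi : E, 0 < v pi < 1 /\
      forall x, v x < 1 -> v x <= v pi;
  pf_complete : forall u : nat -> E,
      (forall e : R, 0 < e -> exists K, forall m k, (K <= m)%N -> (K <= k)%N ->
          v (u m - u k) < e) ->
      exists l : E, forall e : R, 0 < e -> exists K, forall m, (K <= m)%N ->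
          v (u m - l) < e;
  pf_finite_residue : exists s : seq E, all (fun y => v y <= 1) s /\
      forall x, v x <= 1 -> has (fun y => v (x - y) < 1) s
}.

Definition vnorm (R : realType) (E : fieldType) (v : E -> R) (N : nat)
  (x : 'rV[E]_N) : R := \big[Num.max/0]_(j < N) v (x 0 j).

Definition ball0 (R : realType) (E : fieldType) (v : E -> R) (N : nat)
  (r : R) : 'rV[E]_N -> Prop := fun x => vnorm v x <= r.

Definition mdeg (N : nat) (al : 'I_N -> nat) : nat := (\sum_(j < N) al j)%N.

Definition psum (E : fieldType) (N : nat) (c : ('I_N -> nat) -> E) (d : nat)
  (x : 'rV[E]_N) : E :=
  \sum_(al : {ffun 'I_N -> 'I_d.+1} | (\sum_(j < N) (al j : nat) <= d)%N)
     c (fun j => (al j : nat)) * \prod_(j < N) x 0 j ^+ (al j).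

Definition analytic_on_ball (R : realType) (E : fieldType) (v : E -> R)
  (N : nat) (r : R) (f : 'rV[E]_N -> E) : Prop :=
  exists c : ('I_N -> nat) -> E,
    (forall e : R, 0 < e -> exists D, forall al, (D <= mdeg al)%N ->
        v (c al) * r ^+ mdeg al < e) /\
    (forall x, ball0 v r x -> forall e : R, 0 < e -> exists D, forall d,
        (D <= d)%N -> v (f x - psum c d x) < e).

Definition differential_at0 (R : realType) (E : fieldType) (v : E -> R)
  (N : nat) (f : 'rV[E]_N -> E) (L : 'rV[E]_N) : Prop :=
  forall e : R, 0 < e -> exists2 dl : R, 0 < dl & forall x,
    vnorm v x < dl ->
    v (f x - f 0 - \sum_(j < N) L 0 j * x 0 j) <= e * vnorm v x.

Definition nontrivial_add_char (R : realType) (E : fieldType) (v : E -> R)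
  (psi : E -> R[i]) : Prop :=
  [/\ forall x y, psi (x + y) = psi x * psi y,
      forall x, `|psi x| = 1,
      forall x (e : R), 0 < e -> exists2 dl : R, 0 < dl &
        forall y, v (y - x) < dl -> `|psi y - psi x| < (e%:C)%C
    & exists x, psi x != 1].

Definition lin_indep_on (E : fieldType) (N n : nat) (R : realType)
  (S : 'rV[E]_N -> Prop) (g : 'I_n -> 'rV[E]_N -> R[i]) : Prop :=
  forall lam : 'I_n -> R[i],
    (forall x, S x -> \sum_(i < n) lam i * g i x = 0) -> forall i, lam i = 0.

Definition scaled_set (E : fieldType) (N : nat) (c : E) (B : 'rV[E]_N -> Prop)
  : 'rV[E]_N -> Prop := fun x => exists2 y, B y & x = c *: y.

(* Main.v *)
Require Import Defs.
From HB Require Import structures.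
From mathcomp Require Import all_boot all_order all_algebra.
From mathcomp Require Import reals complex ring lra.
Import Order.TTheory GRing.Theory Num.Theory.
Local Open Scope ring_scope.

Section Aux.
Variable R : realType.
Local Notation nc := (@Normc.normc R).

Lemma pow_unbounded (q K : R) : 1 < q -> exists k : nat, K < q ^+ k.
Proof.
move=> hq.
have bern : forall k : nat, 1 + k%:R * (q - 1) <= q ^+ k.
  elim=> [|k IH]; first by rewrite mul0r addr0 expr0.
  rewrite exprS.
  have h0 : 0 <= q ^+ k by rewrite exprn_ge0 // ltW // (lt_trans ltr01).
  have h1 : 0 <= k%:R :> R by rewrite ler0n.
  rewrite -natr1.
  have h3 : 0 <= q * (q ^+ k - 1 - k%:R * (q - 1)).
    by apply: mulr_ge0; [lra | lra].
  have h4 : 0 <= k%:R * ((q - 1) * (q - 1)).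
    by apply: mulr_ge0 => //; apply: mulr_ge0; lra.
  lra.
pose b := Num.Def.archi_bound (Num.max ((K - 1) / (q - 1)) 0).
exists b.
have hb : (Num.max ((K - 1) / (q - 1)) 0) < b%:R by apply: archi_boundP; rewrite le_max lexx orbT.
have hq1 : 0 < q - 1 by rewrite subr_gt0.
have : (K - 1) / (q - 1) < b%:R.
  by apply: le_lt_trans hb; rewrite le_max lexx.
rewrite ltr_pdivrMr // => h.
have := bern b. lra.
Qed.

Lemma nc_ge0 (z : R[i]) : 0 <= nc z.
Proof. by case: z => a b; rewrite /Normc.normc sqrtr_ge0. Qed.

Lemma growth (w : R[i]) :
  (forall k : nat, nc (w ^+ (2 ^ k) - 1) < 1/2) -> w = 1.
Proof.
move=> H.
set d := nc (w - 1).
have step : forall u : R[i], nc (u - 1) < 1/2 -> 3/2 * nc (u - 1) <= nc (u ^+ 2 - 1).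
  move=> u hu.
  have -> : u ^+ 2 - 1 = (u - 1) * (u + 1) by rewrite -subr_sqr expr1n.
  rewrite Normc.normcM.
  have h2 : nc ((1 : R[i]) *+ 2) <= nc (u + 1) + nc (- (u - 1)).
    have -> : (1 : R[i]) *+ 2 = (u + 1) + - (u - 1) by rewrite mulr2n; ring.
    exact: le_normcD.
  rewrite normcN normcMn Normc.normc1 in h2.
  have h0 := nc_ge0 (u - 1).
  nra.
have ind : forall k : nat, (3/2) ^+ k * d <= nc (w ^+ (2 ^ k) - 1).
  elim=> [|k IH]; first by rewrite expr0 mul1r expn0 expr1.
  rewrite expnS mulnC exprM exprS -mulrA.
  have := step _ (H k).
  have : 0 <= 3/2 :> R by lra.
  nra.
have d0 : d = 0.
  apply/eqP; rewrite eq_le; apply/andP; split; last first.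
    exact: nc_ge0.
  rewrite leNgt; apply/negP => dpos.
  have h32 : 1 < 3/2 :> R by lra.
  have [k hk] := pow_unbounded (3/2) (1 / (2 * d)) h32.
  have := H k. have := ind k.
  rewrite ltr_pdivrMr in hk; last by lra.
  nra.
by apply/eqP; rewrite -subr_eq0; apply/eqP; apply: Normc.eq0_normc.
Qed.
End Aux.

Section V.
Variables (R : realType) (E : fieldType) (v : E -> R) (hE : padic_field v).

Lemma v0 : v 0 = 0.
Proof. by apply/eqP; rewrite (pf_eq0 hE). Qed.

Lemma vgt0 x : x != 0 -> 0 < v x.
Proof. by move=> hx; rewrite lt_def (pf_eq0 hE) hx (pf_ge0 hE). Qed.

Lemma v1 : v 1 = 1.
Proof.
have h := pf_mul hE 1 1; rewrite mulr1 in h.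
have h0 : v 1 != 0 by rewrite (pf_eq0 hE) oner_eq0.
by apply: (mulfI h0); rewrite -h mulr1.
Qed.

Lemma vN x : v (- x) = v x.
Proof.
have hm : v (-1) = 1.
  have h := pf_mul hE (-1) (-1); rewrite mulrNN mulr1 v1 in h.
  have h0 := pf_ge0 hE (-1).
  have : (v (-1) - 1) * (v (-1) + 1) = 0 by rewrite -subr_sqr expr1n expr2 -h subrr.
  move/eqP; rewrite mulf_eq0 => /orP [|]; first by rewrite subr_eq0 => /eqP.
  move=> /eqP h2; lra.
by rewrite -mulN1r pf_mul // hm mul1r.
Qed.

Lemma vV x : x != 0 -> v x^-1 = (v x)^-1.
Proof.
move=> hx; have h0 : v x != 0 by rewrite (pf_eq0 hE).
by apply: (mulfI h0); rewrite -pf_mul // !mulfV // v1.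
Qed.

Lemma v_muln x m : v (x *+ m) <= v x.
Proof.
elim: m => [|m IH]; first by rewrite mulr0n v0 (pf_ge0 hE).
rewrite mulrS; apply: le_trans (pf_ultra hE _ _) _.
by rewrite ge_max lexx IH.
Qed.

Lemma v_exp x m : v (x ^+ m) = v x ^+ m.
Proof.
elim: m => [|m IH]; first by rewrite !expr0 v1.
by rewrite !exprS pf_mul // IH.
Qed.

Lemma vnorm_ge0 N (y : 'rV[E]_N) : 0 <= vnorm v y.
Proof.
rewrite /vnorm; elim/big_ind: _ => [|a b ha hb|j _] //; first by rewrite le_max ha.
exact: (pf_ge0 hE).
Qed.

Lemma vnorm_term N (y : 'rV[E]_N) j : v (y 0 j) <= vnorm v y.
Proof.
by rewrite /vnorm (bigD1 j) //= le_max lexx.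
Qed.

Lemma vnorm_leP N (y : 'rV[E]_N) K : 0 <= K ->
  (vnorm v y <= K <-> forall j, v (y 0 j) <= K).
Proof.
move=> hK; split.
  by move=> h j; exact: (le_trans (vnorm_term _ y j) h).
move=> h; rewrite /vnorm; elim/big_ind: _ => // a b ha hb.
by rewrite ge_max ha hb.
Qed.

Lemma vnormZ N (c : E) (y : 'rV[E]_N) : vnorm v (c *: y) <= v c * vnorm v y.
Proof.
apply/vnorm_leP; first by apply: mulr_ge0; [exact: (pf_ge0 hE)|exact: vnorm_ge0].
move=> j; rewrite mxE pf_mul //; apply: ler_wpM2l; first exact: (pf_ge0 hE).
exact: vnorm_term.
Qed.

End V.

Section Psi.
Variables (R : realType) (E : fieldType) (v : E -> R) (hE : padic_field v).
Variables (psi : E -> R[i]) (hpsi : nontrivial_add_char v psi).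
Local Notation nc := (@Normc.normc R).

Lemma psiD x y : psi (x + y) = psi x * psi y.
Proof. by case: hpsi. Qed.

Lemma psi_neq0 x : psi x != 0.
Proof.
case: hpsi => _ hn _ _; apply/eqP => h; have := hn x; rewrite h normr0 => /eqP.
by rewrite eq_sym oner_eq0.
Qed.

Lemma psi0 : psi 0 = 1.
Proof.
have h := psiD 0 0; rewrite addr0 in h.
have h0 := psi_neq0 0.
by apply: (mulfI h0); rewrite -h mulr1.
Qed.

Lemma psi_muln x m : psi (x *+ m) = psi x ^+ m.
Proof.
elim: m => [|m IH]; first by rewrite mulr0n expr0 psi0.
by rewrite mulrS psiD IH exprS.
Qed.

Lemma psi_loc : exists2 dl : R, 0 < dl & forall y, v y < dl -> psi y = 1.
Proof.
case: hpsi => _ _ hc _.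
have [dl dl0 H] := hc 0 (1/2) (ltac:(lra)).
exists dl => // y hy.
apply: growth => k.
have := H (y *+ (2 ^ k)).
rewrite psi0 subr0 -psi_muln.
move=> h; have := h (le_lt_trans (@v_muln _ _ _ hE _ _) hy).
by rewrite -ltcR.
Qed.

End Psi.

Lemma dedekind (C : fieldType) (T : Type) (S : T -> Prop) (add : T -> T -> T)
  (y0 : T) (Sy0 : S y0) (Sadd : forall y z, S y -> S z -> S (add y z)) :
  forall n (chi : 'I_n -> T -> C),
  (forall i y z, chi i (add y z) = chi i y * chi i z) ->
  (forall i y, chi i y != 0) ->
  (forall i j, i != j -> exists2 y, S y & chi i y != chi j y) ->
  forall c : 'I_n -> C, (forall y, S y -> \sum_i c i * chi i y = 0) ->
  forall i, c i = 0.
Proof.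
elim=> [|n IH] chi hM hnz hd c hc i; first by case: i.
have hlift : forall k : 'I_n, c (lift ord0 k) = 0.
  move=> k.
  have [z Sz hz] := hd ord0 (lift ord0 k) (neq_lift _ _).
  pose d := fun k' => c (lift ord0 k') * (chi (lift ord0 k') z - chi ord0 z).
  have hd' : forall i' j' : 'I_n, i' != j' ->
      exists2 y, S y & chi (lift ord0 i') y != chi (lift ord0 j') y.
    move=> i' j' ne; apply: hd; by rewrite (inj_eq (@lift_inj _ ord0)).
  suff hs : forall y, S y -> \sum_i d i * chi (lift ord0 i) y = 0.
    have := IH (fun k' => chi (lift ord0 k')) (fun i' => hM _) (fun i' => hnz _) hd' d hs k.
    rewrite /d => /eqP; rewrite mulf_eq0 subr_eq0 => /orP [/eqP //|].
    by rewrite eq_sym (negbTE hz).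
  move=> y Sy.
  have h1 := hc _ (Sadd z y Sz Sy); have h2 := hc _ Sy.
  transitivity (\sum_i c i * chi i (add z y) - chi ord0 z * \sum_i c i * chi i y);
    last by rewrite h1 h2 mulr0 subr0.
  rewrite mulr_sumr -sumrB big_ord_recl hM.
  have -> : c ord0 * (chi ord0 z * chi ord0 y) - chi ord0 z * (c ord0 * chi ord0 y) = 0 by ring.
  rewrite add0r; apply: eq_bigr => k' _; rewrite /d hM; ring.
case: (unliftP ord0 i) => [k ->|->]; first exact: hlift.
have := hc y0 Sy0; rewrite big_ord_recl big1 ?addr0 => [/eqP|k _]; last by rewrite hlift mul0r.
by rewrite mulf_eq0 (negbTE (hnz _ _)) orbF => /eqP.
Qed.

Lemma le_sum_nonneg {R : realType} {I : finType} (F : I -> R) (i0 : I) :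
  (forall i, 0 <= F i) -> F i0 <= \sum_i F i.
Proof.
move=> h; rewrite (bigD1 i0) //= lerDl; apply: sumr_ge0 => i _; exact: h.
Qed.

Theorem lemma2p7 (R : realType) (E : fieldType) (v : E -> R)
  (hE : padic_field v) (psi : E -> R[i]) (hpsi : nontrivial_add_char v psi)
  (N n : nat) (r : R) (hr : 0 < r) (f : 'I_n -> 'rV[E]_N -> E)
  (hf : forall i, analytic_on_ball v r (f i))
  (D : 'M[E]_(n, N)) (hD : forall i, differential_at0 v (f i) (row i D))
  (hind : row_free D) :
  exists2 a : E, a != 0 &
    exists M : R, forall t : E, t != 0 -> M < v t ->
      lin_indep_on (scaled_set (t^-1 * a) (ball0 v r))
                   (fun i x => psi (t * f i x)).
Proof.
case: (hpsi) => hadd hnorm hcont [x0 hx0].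
have [dlp dlp0 hloc] := @psi_loc _ _ _ hE _ hpsi.
have hrow : forall i j : 'I_n, i != j -> exists k, D i k - D j k != 0.
  move=> i j ne.
  have hne : ((delta_mx 0 i - delta_mx 0 j : 'rV[E]_n) *m D != 0).
    rewrite mulmx_free_eq0 //; apply/eqP => /matrixP /(_ 0 i).
    rewrite !mxE (negbTE ne) /= subr0 eqxx => /eqP; by rewrite oner_eq0.
  case: (pickP (fun k => D i k - D j k != 0)) => [k hk|h]; first by exists k.
  exfalso; move: hne; apply/negP; rewrite negbK.
  apply/eqP/matrixP => a b; rewrite mulmxBl -!rowE !mxE.
  by have := h b => /= /negbFE /eqP.
have [pi [/andP [pi0 pi1] _]] := pf_discrete hE.
have pin0 : pi != 0 by rewrite -(pf_eq0 hE) lt0r_neq0.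
pose Kc := \sum_i \sum_j \sum_k
  (if D i k - D j k != 0 then v x0 / (r * v (D i k - D j k)) else 0).
have hq : 1 < v pi^-1 by rewrite (@vV _ _ _ hE) // invf_gt1.
have [m hm] := @pow_unbounded _ _ Kc hq.
pose a := pi^-1 ^+ m.
have an0 : a != 0 by rewrite expf_neq0 // invr_eq0.
have hva : v a = v pi^-1 ^+ m by rewrite /a (@v_exp _ _ _ hE).
exists a => //.
pose A := v a.
have A0 : 0 < A by exact: (@vgt0 _ _ _ hE).
pose e := dlp / (2 * (A * r)).
have e0 : 0 < e by rewrite /e divr_gt0 // mulr_gt0 // mulr_gt0.
have : forall i, exists dd : R, 0 < dd /\ forall x, vnorm v x < dd ->
    v (f i x - f i 0 - \sum_j (row i D) 0 j * x 0 j) <= e * vnorm v x.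
  by move=> i; have [dd h1 h2] := hD i e e0; exists dd.
case/fin_all_exists => dlf hdlf.
exists (\sum_i A * r / dlf i).
move=> t tn0 hMt lam hlam.
pose T := v t.
have T0 : 0 < T by exact: (@vgt0 _ _ _ hE).
have key : forall i y, ball0 v r y ->
    psi (t * f i ((t^-1 * a) *: y)) =
    psi (t * f i 0) * psi (a * \sum_j D i j * y 0 j).
  move=> i y hy.
  set x := (t^-1 * a) *: y.
  set rem := f i x - f i 0 - \sum_j (row i D) 0 j * x 0 j.
  have hsum : t * \sum_j (row i D) 0 j * x 0 j = a * \sum_j D i j * y 0 j.
    rewrite !mulr_sumr; apply: eq_bigr => j _; rewrite !mxE; field.
    exact: tn0.
  have -> : t * f i x = t * f i 0 + a * \sum_j D i j * y 0 j + t * rem.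
    by rewrite -hsum /rem; ring.
  rewrite hadd hadd (hloc (t * rem)) ?mulr1 //.
  have hvx : vnorm v x <= A * r / T.
    apply: le_trans (@vnormZ _ _ _ hE _ _ _) _.
    rewrite pf_mul // (@vV _ _ _ hE) // -/T -/A.
    have hyr : vnorm v y <= r by exact: hy.
    rewrite [A * r / T]mulrC mulrA; apply: ler_wpM2l => //.
    by apply: mulr_ge0; [rewrite invr_ge0 ltW | rewrite ltW].
  have hdd : A * r / dlf i < T.
    apply: le_lt_trans hMt.
    apply: (le_sum_nonneg (fun i => A * r / dlf i) i) => i'.
    by apply: divr_ge0; [apply: mulr_ge0; rewrite ltW | rewrite ltW; case: (hdlf i')].
  have hxd : vnorm v x < dlf i.
    apply: le_lt_trans hvx _.
    have dl0 : 0 < dlf i by case: (hdlf i).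
    rewrite ltr_pdivrMr //; rewrite ltr_pdivrMr // in hdd; by rewrite [dlf i * T]mulrC.
  have hrem := (hdlf i).2 x hxd.
  rewrite pf_mul // -/T.
  have hrem0 : 0 <= v rem by exact: pf_ge0.
  have : T * v rem <= T * (e * (A * r / T)).
    apply: ler_wpM2l; first exact: ltW.
    apply: le_trans hrem _; apply: ler_wpM2l => //; exact: ltW.
  have -> : T * (e * (A * r / T)) = dlp / 2.
    rewrite /e; field.
    by rewrite !lt0r_neq0.
  move=> h; apply: le_lt_trans h _; lra.
have S0 : ball0 v r (0 : 'rV[E]_N).
  rewrite /ball0; apply: (iffRL (@vnorm_leP _ _ _ _ _ _ (ltW hr))) => j; by rewrite mxE (@v0 _ _ _ hE) // ltW.
have Sadd : forall y z : 'rV[E]_N, ball0 v r y -> ball0 v r z -> ball0 v r (y + z).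
  rewrite /ball0 => y z /(@vnorm_leP _ _ _ _ _ _ (ltW hr)) hy /(@vnorm_leP _ _ _ _ _ _ (ltW hr)) hz.
  rewrite /ball0; apply/(@vnorm_leP _ _ _ _ _ _ (ltW hr)) => j; rewrite mxE.
  apply: le_trans (pf_ultra hE _ _) _; by rewrite ge_max hy hz.
have hM : forall i (y z : 'rV[E]_N),
    psi (a * \sum_j D i j * (y + z) 0 j) =
    psi (a * \sum_j D i j * y 0 j) * psi (a * \sum_j D i j * z 0 j).
  move=> i y z; rewrite -hadd //; congr psi.
  rewrite -mulrDr -big_split; congr (_ * _); apply: eq_bigr => j _.
  by rewrite mxE mulrDr.
have hdist : forall i j : 'I_n, i != j -> exists2 y, ball0 v r y &
    psi (a * \sum_j0 D i j0 * y 0 j0) != psi (a * \sum_j0 D j j0 * y 0 j0).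
  move=> i j ne; have [k hk] := hrow i j ne.
  pose b := x0 / (a * (D i k - D j k)).
  exists (b *: delta_mx 0 k).
    have hb : v b <= r.
      have hl0 : 0 < v (D i k - D j k) by exact: (@vgt0 _ _ _ hE).
      rewrite /b pf_mul // (@vV _ _ _ hE) ?mulf_neq0 // pf_mul // -/A.
      have ht : v x0 / (r * v (D i k - D j k)) <= Kc.
        pose G := fun (i j : 'I_n) (k : 'I_N) =>
          if D i k - D j k != 0 then v x0 / (r * v (D i k - D j k)) else 0.
        have G0 : forall i j k, 0 <= G i j k.
          move=> i' j' k'; rewrite /G; case: ifP => _ //.
          apply: divr_ge0; first exact: pf_ge0.
          apply: mulr_ge0; [exact: ltW | exact: pf_ge0].
        have -> : v x0 / (r * v (D i k - D j k)) = G i j k by rewrite /G hk.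
        apply: le_trans (le_sum_nonneg (G i j) k (G0 i j)) _.
        apply: le_trans (le_sum_nonneg (fun j => \sum_k G i j k) j _) _.
          by move=> j'; apply: sumr_ge0 => k' _.
        apply: (le_sum_nonneg (fun i => \sum_j \sum_k G i j k) i).
        by move=> i'; apply: sumr_ge0 => j' _; apply: sumr_ge0 => k' _.
      have hKA : Kc <= A by rewrite /A hva ltW.
      have := le_trans ht hKA.
      rewrite ler_pdivrMr ?mulr_gt0 // => h1.
      rewrite ler_pdivrMr ?mulr_gt0 //.
      by rewrite mulrA [r * A]mulrC -mulrA.
    rewrite /ball0; apply/(@vnorm_leP _ _ _ _ _ _ (ltW hr)) => j'; rewrite !mxE eqxx /=.
    case: eqP => _; first by rewrite mulr1.
    by rewrite mulr0 (@v0 _ _ _ hE) // ltW.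
  have hdiff : \sum_j0 D i j0 * (b *: (delta_mx 0 k : 'rV[E]_N)) 0 j0 =
      \sum_j0 D j j0 * (b *: (delta_mx 0 k : 'rV[E]_N)) 0 j0 + (D i k - D j k) * b.
    apply/eqP; rewrite -subr_eq0 opprD addrA subr_eq0 -sumrB; apply/eqP.
    rewrite (bigD1 k) //= big1 ?addr0; first by rewrite !mxE !eqxx /= !mulr1 mulrBl.
    by move=> j' hj'; rewrite !mxE eqxx (negbTE hj') /= !mulr0 subrr.
  rewrite hdiff mulrDr.
  have -> : a * ((D i k - D j k) * b) = x0.
    by rewrite /b; field; rewrite hk an0.
  rewrite hadd //.
  apply/negP => /eqP h.
  have : psi (a * \sum_j0 D j j0 * (b *: (delta_mx 0 k : 'rV[E]_N)) 0 j0) * (psi x0 - 1) = 0.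
    by rewrite mulrBr mulr1 h subrr.
  move/eqP; rewrite mulf_eq0 (negbTE (@psi_neq0 _ _ _ _ hpsi _)) /= subr_eq0.
  by rewrite (negbTE hx0).
have hs : forall y, ball0 v r y ->
    \sum_i (lam i * psi (t * f i 0)) * psi (a * \sum_j D i j * y 0 j) = 0.
  move=> y hy.
  transitivity (\sum_i lam i * psi (t * f i ((t^-1 * a) *: y))); last first.
    by apply: hlam; exists y.
  by apply: eq_bigr => i _; rewrite key // mulrA.
have := @dedekind _ _ (ball0 v r) +%R 0 S0 Sadd n
  (fun i y => psi (a * \sum_j D i j * y 0 j)) hM (fun i y => @psi_neq0 _ _ _ _ hpsi _)
  hdist _ hs.
move=> hc i; have := hc i => /eqP.
by rewrite mulf_eq0 (negbTE (@psi_neq0 _ _ _ _ hpsi _)) orbF => /eqP.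
Qed.
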